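(* Let $p\ge1$ and let $\mathbf X$ be a random variable with values in $\mathcal G^w_p(V)$ such that $\mathbb E|\langle\mathbf X_{0,T},e_\sigma\rangle|<\infty$ for all $\sigma\in[d]^*$. Then for every $k\ge1$ and nonempty words $\tau_1,\dots,\tau_k\in[d]^*$, with $\boldsymbol\tau=(\tau_1,\dots,\tau_k)$, $$\langle\kappa_{\mathbf X},e_{\tau_1}\sqcup\cdots\sqcup e_{\tau_k}\rangle=\sum_{\mathbf a\in\mathrm{Orp}(\boldsymbol\tau)}(-1)^{|\mathbf a|-1}\frac{\mathbf a!}{|\mathbf a|}\,\mu_{\mathbf X}(\mathbf a).$$
   Context: Let $V=\mathbb R^d$ with basis $e_1,\dots,e_d$; $[n]=\{1,\dots,n\}$; $[d]^*=\bigcup_{m\ge0}[d]^m$ is the set of words, $|\tau|$ the length, $e_\tau=e_{i_1}\otimes\cdots\otimes e_{i_m}$ for $\tau=(i_1,\dots,i_m)$, $e_{()}=1$. $T(V)=\bigoplus_{m\ge0}V^{\otimes m}$, $T((V))=\prod_{m\ge0}V^{\otimes m}$ (an algebra under $\otimes$), pairing $\langle s,t\rangle=\sum_\tau s_\tau t_\tau$. For $y\in T((V))$ with $\langle y,1\rangle=1$, $\log y=\sum_{n\ge1}\frac{(-1)^{n-1}}{n}(y-1)^{\otimes n}$. The shuffle product $\sqcup$ on $T(V)$ is the bilinear extension of $e_{\tau_1}\sqcup e_{\tau_2}=\sum_\sigma e_\sigma$ over all interleavings $\sigma$ of $\tau_1,\tau_2$ counted with multiplicity; it is associative and commutative. Weakly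 geometric $p$-rough paths ($p\ge1$, $T>0$): maps $\mathbf x:\{(s,t):0\le s\le t\le T\}\to T((V))$ with, for $0\le s\le t\le u\le T$, (i) $\langle\mathbf x_{s,t},1\rangle=1$, $\langle\mathbf x_{s,t},f\sqcup g\rangle=\langle\mathbf x_{s,t},f\rangle\langle\mathbf x_{s,t},g\rangle$ for $f,g\in T(V)$; (ii) $\mathbf x_{s,t}\otimes\mathbf x_{t,u}=\mathbf x_{s,u}$; (iii) finite $p$-variation $\max_{1\le m\le p}\sup_D(\sum_i|\pi_m\mathbf x_{t_i,t_{i+1}}|^{p/m})^{1/p}<\infty$. $\mathcal G^w_p(V)$ is the set of these. For a random $\mathbf X$ with integrable signature coordinates: $\mu_{\mathbf X}=\mathbb E[\mathbf X_{0,T}]$, $\kappa_{\mathbf X}=\log\mu_{\mathbf X}$. Partitions and ordered partitions: for a finite poset $P$, $\mathcal P(P)$ is the set of partitions into nonempty blocks, ordered by refinement; $|\mathbf a|$ is the number of blocks. $f:P\to\mathbb N$ is order-preserving if $x\le y\Rightarrow f(x)\le f(y)$; $\ker f$ is the set of nonempty fibres; $\mathrm{Orp}(P)=\{\ker f: f \text{ order-preserving}\}$; for $\mathbf a\in\mathrm{Orp}(P)$, $\mathbf a!=\#\{f:P\to[|\mathbf a|]\text{ order-preserving}:\ker f=\mathbf a\}$. Word poset: $P_{\boldsymbol\tau}=\{(j,p):j\in[k],p\in[|\tau_j|]\}$ (positions treated as distinct even if letters repeat), with $(j,p)\le(j',p')$ iff $j=j'$ and $p\le p'$; $\mathcal P(\boldsymbol\tau)=\mathcal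 P(P_{\boldsymbol\tau})$, $\mathrm{Orp}(\boldsymbol\tau)=\mathrm{Orp}(P_{\boldsymbol\tau})$. For a block $B$ and $j$, $B^j=B\cap(\{j\}\times[|\tau_j|])$; if nonempty with positions $p_1<\dots<p_r$, $e_{B^j}=e_{\tau_j(p_1)}\otimes\cdots\otimes e_{\tau_j(p_r)}$ ($\tau_j(p)$ the $p$-th letter). Generalised moment: $\mu_{\mathbf X}(\mathbf a)=\prod_{B\in\mathbf a}\mathbb E\big[\prod_{j:B^j\ne\emptyset}\langle\mathbf X_{0,T},e_{B^j}\rangle\big]$. *)

(* Defs.v *)
From HB Require Import structures.
From mathcomp Require Import all_boot all_order all_algebra.
From mathcomp Require Import all_classical all_reals all_analysis.
Set Implicit Arguments. Unset Strict Implicit. Unset Printing Implicit Defensive.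
Import Order.TTheory GRing.Theory Num.Theory.
Import numFieldNormedType.Exports.
Local Open Scope ring_scope.

Section Tensor.
Variables (R : realType) (d : nat).

(* words over the alphabet [d] = {0,..,d-1} (0-based letters) *)
Definition word := seq 'I_d.

(* T((V)) : formal tensor tseries, given by their coefficients <x, e_w> *)
Definition tseries := word -> R.

Definition tone : tseries := fun w => if w is [::] then 1 else 0.

Definition tmul (x y : tseries) : tseries :=
  fun w => \sum_(i < (size w).+1) x (take i w) * y (drop i w).

Fixpoint tpow (x : tseries) (n : nat) : tseries :=
  if n is n'.+1 then tmul x (tpow x n') else tone.

(* log y = sum_{n>=1} (-1)^(n-1)/n (y-1)^{(x) n}; the coefficient at a word w
   only receives contributions from n <= |w| when <y,1> = 1. *)
Definition tlog (y : tseries) : tseries :=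
  fun w => \sum_(1 <= n < (size w).+1)
             ((-1) ^+ n.-1 / n%:R) * tpow (fun v => y v - tone v) n w.

(* T(V): finite linear combinations sum_i c_i e_{w_i} *)
Definition tpoly := seq (R * word).

Definition pairing (x : tseries) (f : tpoly) : R := \sum_(c <- f) c.1 * x c.2.

(* shuffles of two words: all interleavings, with multiplicity *)
Fixpoint shw (u v : word) {struct u} : seq word :=
  match u with
  | [::] => [:: v]
  | a :: u' =>
      let fix aux (v : word) : seq word :=
        match v with
        | [::] => [:: u]
        | b :: v' => map (cons a) (shw u' v) ++ map (cons b) (aux v')
        end in aux v
  end.

Definition shp (f g : tpoly) : tpoly :=
  flatten [seq [seq (a.1 * b.1, w) | w <- shw a.2 b.2] | a <- f, b <- g].

Definition ebasis (w : word) : tpoly := [:: (1, w)].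

Definition lvlnorm (m : nat) (y : tseries) : R :=
  Num.sqrt (\sum_(t : m.-tuple 'I_d) (y (val t)) ^+ 2).

(* weakly geometric p-rough path on [0,T]; x s t is only constrained
   for 0 <= s <= t <= T *)
Definition wgrp (p T : R) (x : R -> R -> tseries) : Prop :=
  [/\ (forall s t, 0 <= s -> s <= t -> t <= T ->
         x s t [::] = 1 /\
         forall f g : tpoly,
           pairing (x s t) (shp f g) = pairing (x s t) f * pairing (x s t) g),
      (forall s t u, 0 <= s -> s <= t -> t <= u -> u <= T ->
         tmul (x s t) (x t u) = x s u) &
      (* finite p-variation: for 1 <= m <= p the sums over partitions
         0 = t_0 < t_1 < ... < t_n = T are uniformly bounded *)
      exists C : R, forall m : nat, (1 <= m)%N -> m%:R <= p ->
        forall ts : seq R, path <%R 0 ts -> last 0 ts = T ->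
          \sum_(i <- zip (0 :: ts) ts)
             powR (lvlnorm m (x i.1 i.2)) (p / m%:R) <= C].

End Tensor.

Section Partitions.
Variables (P : finType) (le : rel P).

Definition order_pres (f : P -> nat) : bool :=
  [forall x, forall y, le x y ==> (f x <= f y)%N].

Definition kerf (f : P -> nat) : {set {set P}} :=
  [set [set y | f y == f x] | x : P].

Definition isOrp (a : {set {set P}}) : Prop :=
  exists f : P -> nat, order_pres f /\ kerf f = a.

(* a! = #{ f : P -> [|a|] order preserving : ker f = a },
   [|a|] = {1,..,|a|} realised inside 'I_(|a|+1) *)
Definition afact (a : {set {set P}}) : nat :=
  #|[set g : {ffun P -> 'I_(#|a|.+1)} |
      [forall x, (0 < g x)%N] &&
      order_pres (fun x => nat_of_ord (g x)) &&
      (kerf (fun x => nat_of_ord (g x)) == a)]|.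
End Partitions.

Section WordPoset.
Variables (d k : nat) (tau : 'I_k -> seq 'I_d).

(* P_tau = {(j,p) : j in [k], p in [|tau_j|]} (0-based indices) *)
Definition Ptau := {j : 'I_k & 'I_(size (tau j))}.

Definition le_tau : rel Ptau :=
  fun x y => (tag x == tag y) && (nat_of_ord (tagged x) <= nat_of_ord (tagged y))%N.

Definition inB (B : {set Ptau}) (j : 'I_k) (q : 'I_(size (tau j))) : bool :=
  Tagged (fun j => 'I_(size (tau j))) q \in B.

Definition blockword (B : {set Ptau}) (j : 'I_k) : seq 'I_d :=
  [seq tnth (in_tuple (tau j)) q | q <- enum 'I_(size (tau j)) & inB B q].
End WordPoset.

Section Moments.
Local Open Scope classical_set_scope.
Variables (dO : measure_display) (Omega : measurableType dO) (R : realType)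
  (Pr : probability Omega R) (d : nat) (T : R) (X : Omega -> R -> R -> tseries R d).

Definition muX : tseries R d := fun w => Rintegral Pr setT (fun om => X om 0 T w).

Definition kappaX : tseries R d := tlog muX.

Definition gen_moment (k : nat) (tau : 'I_k -> seq 'I_d) (a : {set {set Ptau tau}}) : R :=
  \prod_(B in a) Rintegral Pr setT
     (fun om => \prod_(j : 'I_k | [exists q : 'I_(size (tau j)), inB B q])
                  X om 0 T (blockword B j)).
End Moments.

(* Main.v *)
Require Import Defs.
From HB Require Import structures.
From mathcomp Require Import all_boot all_order all_algebra.
From mathcomp Require Import all_classical all_reals all_analysis.
From mathcomp Require Import ring.
Import Order.TTheory GRing.Theory Num.Theory.
Import numFieldNormedType.Exports.
Local Open Scope ring_scope.
Set Implicit Arguments. Unset Strict Implicit. Unset Printing Implicit Defensive.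

Section Words.
Variable d : nat.
Local Notation W := (word d).
Variable V : nmodType.
Arguments shw {d} u v : simpl never.

Lemma shw_nil_l (v : W) : shw [::] v = [:: v]. Proof. by []. Qed.
Lemma shw_nil_r (u : W) : shw u [::] = [:: u]. Proof. by case: u. Qed.
Lemma shw_cons a (u : W) b v : shw (a::u) (b::v) =
  map (cons a) (shw u (b::v)) ++ map (cons b) (shw (a::u) v).
Proof. by []. Qed.

Lemma nmod_rearr (a1 a2 x y z w : V):
  a1 + (x + y) + (a2 + (z + w)) = a1 + a2 + z + (x + (y + w)).
Proof.
rewrite -!addrA; congr (_ + _).
rewrite [y + _]addrCA [x + _]addrCA; congr (_ + _).
by rewrite [y + _]addrCA [x + _]addrCA.
Qed.

Lemma delta_nil (v : W) (F : W -> W -> V) :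
  \sum_(i < (size v).+1) F (take i v) (drop i v) =
  \sum_(i < (size ([::] : W)).+1) \sum_(j < (size v).+1)
     \sum_(x1 <- shw (take i [::]) (take j v))
        \sum_(x2 <- shw (drop i [::]) (drop j v)) F x1 x2.
Proof.
rewrite big_ord1 /=; apply: eq_bigr => j _.
by rewrite big_seq1 big_seq1.
Qed.

Lemma shw_delta (u v : W) (F : W -> W -> V) :
  \sum_(x <- shw u v) \sum_(i < (size x).+1) F (take i x) (drop i x) =
  \sum_(i < (size u).+1) \sum_(j < (size v).+1)
     \sum_(x1 <- shw (take i u) (take j v))
        \sum_(x2 <- shw (drop i u) (drop j v)) F x1 x2.
Proof.
move: {2}(size u + size v)%N (leqnn (size u + size v)%N) => m.
elim: m u v F => [|m IH] u v F.
  case: u => [|a u] //; case: v => [|b v] // _.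
  by rewrite big_seq1 /= !big_ord_recl !big_ord0 /= !big_seq1 !addr0.
case: u => [|a u].
  by move=> _; rewrite shw_nil_l big_seq1 delta_nil.
case: v => [|b v].
  move=> _; rewrite shw_nil_r big_seq1 /=.
  apply: eq_bigr => i _; rewrite big_ord_recl big_ord0 addr0 /=.
  by rewrite !shw_nil_r !big_seq1.
move=> Hs.
have Hu : (size u + size (b :: v) <= m)%N by move: Hs => /=; rewrite addSn ltnS.
have Hv : (size (a :: u) + size v <= m)%N by move: Hs => /=; rewrite addnS ltnS.
set A1 := \sum_(x <- shw u (b :: v)) F [::] (a :: x).
set A2 := \sum_(x <- shw (a :: u) v) F [::] (b :: x).
have EL : forall c w (G : W -> W -> V), \sum_(x <- shw w v) \sum_(i < (size (c :: x)).+1)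
     G (take i (c :: x)) (drop i (c :: x)) =
   \sum_(x <- shw w v) G [::] (c :: x) +
   \sum_(x <- shw w v) \sum_(i < (size x).+1) G (c :: take i x) (drop i x).
  move=> c w G; rewrite -big_split /=; apply: eq_bigr => x _.
  by rewrite big_ord_recl /=; congr (_ + _); apply: eq_bigr => i _; rewrite add0n.
have EL2 : forall c w w' (G : W -> W -> V), \sum_(x <- shw w w') \sum_(i < (size (c :: x)).+1)
     G (take i (c :: x)) (drop i (c :: x)) =
   \sum_(x <- shw w w') G [::] (c :: x) +
   \sum_(x <- shw w w') \sum_(i < (size x).+1) G (c :: take i x) (drop i x).
  move=> c w w' G; rewrite -big_split /=; apply: eq_bigr => x _.
  by rewrite big_ord_recl /=; congr (_ + _); apply: eq_bigr => i _; rewrite add0n.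
rewrite shw_cons big_cat !big_map !EL2.
rewrite (IH _ _ (fun p q => F (a :: p) q) Hu) (IH _ _ (fun p q => F (b :: p) q) Hv).
have Ea : \sum_(i < (size u).+1) \sum_(j < (size (b :: v)).+1)
     \sum_(x1 <- shw (take i u) (take j (b :: v)))
        \sum_(x2 <- shw (drop i u) (drop j (b :: v))) F (a :: x1) x2 =
   \sum_(i < (size u).+1) (\sum_(x2 <- shw (drop i u) (b :: v)) F (a :: take i u) x2 +
     \sum_(j < (size v).+1) \sum_(x1 <- shw (take i u) (b :: take j v))
        \sum_(x2 <- shw (drop i u) (drop j v)) F (a :: x1) x2).
  apply: eq_bigr => i _; rewrite big_ord_recl /= shw_nil_r big_seq1; congr (_ + _).
have Eb : \sum_(i < (size (a :: u)).+1) \sum_(j < (size v).+1)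
     \sum_(x1 <- shw (take i (a :: u)) (take j v))
        \sum_(x2 <- shw (drop i (a :: u)) (drop j v)) F (b :: x1) x2 =
   \sum_(j < (size v).+1) \sum_(x2 <- shw (a :: u) (drop j v)) F (b :: take j v) x2 +
   \sum_(i < (size u).+1) \sum_(j < (size v).+1)
     \sum_(x1 <- shw (a :: take i u) (take j v))
        \sum_(x2 <- shw (drop i u) (drop j v)) F (b :: x1) x2.
  rewrite big_ord_recl /=; congr (_ + _).
    by apply: eq_bigr => j _; rewrite shw_nil_l big_seq1.
have ER : \sum_(i < (size (a :: u)).+1) \sum_(j < (size (b :: v)).+1)
     \sum_(x1 <- shw (take i (a :: u)) (take j (b :: v)))
        \sum_(x2 <- shw (drop i (a :: u)) (drop j (b :: v))) F x1 x2 =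
   (A1 + A2 + \sum_(j < (size v).+1) \sum_(x2 <- shw (a :: u) (drop j v)) F (b :: take j v) x2) +
   (\sum_(i < (size u).+1) \sum_(x2 <- shw (drop i u) (b :: v)) F (a :: take i u) x2 +
     (\sum_(i < (size u).+1) \sum_(j < (size v).+1) \sum_(x1 <- shw (take i u) (b :: take j v))
        \sum_(x2 <- shw (drop i u) (drop j v)) F (a :: x1) x2 +
      \sum_(i < (size u).+1) \sum_(j < (size v).+1) \sum_(x1 <- shw (a :: take i u) (take j v))
        \sum_(x2 <- shw (drop i u) (drop j v)) F (b :: x1) x2)).
  rewrite big_ord_recl /=; congr (_ + _).
    rewrite big_ord_recl /= shw_nil_l big_seq1 shw_cons big_cat !big_map; congr (_ + _).
    by apply: eq_bigr => j _; rewrite shw_nil_l big_seq1 add0n.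
  rewrite -big_split -big_split /=; apply: eq_bigr => i _.
  rewrite big_ord_recl /= shw_nil_r big_seq1 add0n -big_split; congr (_ + _).
  apply: eq_bigr => j _; rewrite add0n shw_cons big_cat !big_map //.
rewrite ER Ea Eb big_split /=.
set s1 := \sum_(i < _) \sum_(j < _) \sum_(x1 <- shw (take i u) _) _.
set s2 := \sum_(i < _) \sum_(j < _) \sum_(x1 <- shw (a :: take i u) _) _.
set s3 := \sum_(i < _) \sum_(x2 <- _) _.
set s4 := \sum_(j < _) \sum_(x2 <- _) _.
exact: nmod_rearr.
Qed.
End Words.

Section NSdef.
Variable V : nmodType.
Definition upd (I : eqType) (c : I -> nat) (j : I) (x : nat) : I -> nat :=
  fun i => if i == j then x else c i.

Fixpoint NS (I : eqType) (r : seq I) (bnd : I -> nat) (F : (I -> nat) -> V) : V :=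
  match r with
  | [::] => F (fun _ => 0%N)
  | j :: r' => \sum_(x < (bnd j).+1) NS r' bnd (fun c => F (upd c j x))
  end.

Lemma eq_NS (I : eqType) (r : seq I) bnd (F G : (I -> nat) -> V) :
  (forall c, (forall i, (c i <= bnd i)%N) -> F c = G c) -> NS r bnd F = NS r bnd G.
Proof.
elim: r F G => [|j r IH] F G H /=; first by apply: H.
apply: eq_bigr => x _; apply: IH => c Hc; apply: H => i.
rewrite /upd; case: eqP => [->|_] //; exact: (ltn_ord x).
Qed.

Lemma NS_sum (I : eqType) (r : seq I) bnd (J : finType) (P : pred J) (F : J -> (I -> nat) -> V) :
  NS r bnd (fun c => \sum_(y | P y) F y c) = \sum_(y | P y) NS r bnd (F y).
Proof.
elim: r F => [|j r IH] F //=.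
under eq_bigr => x _ do rewrite IH.
by rewrite exchange_big.
Qed.

Lemma NS_delta (I : eqType) (r : seq I) bnd (h : I -> nat) (X : V) :
  uniq r -> (forall i, i \in r -> (h i <= bnd i)%N) ->
  NS r bnd (fun c => if all (fun i => c i == h i) r then X else 0) = X.
Proof.
elim: r X => [|j r IH] X //= /andP[jr ur] Hh.
have Hj : (h j < (bnd j).+1)%N by rewrite ltnS Hh // mem_head.
rewrite (bigD1 (Ordinal Hj)) //= /upd eqxx eqxx /=.
  rewrite big1 ?addr0.
    rewrite -[RHS](IH X ur); last by move=> i ir; apply: Hh; rewrite in_cons ir orbT.
    apply: eq_NS => c _; congr (if _ then _ else _).
    apply: eq_in_all => i ir /=.
    have ij : i != j by apply/eqP => E; move: jr; rewrite -E ir.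
    by rewrite (negbTE ij).
  move=> x Hx.
  have -> : (x == h j :> nat) = false.
    by apply/negbTE; move: Hx; apply: contra => /eqP E; apply/eqP/val_inj.
  elim: r {IH ur Hh jr} => [|j' r' IH'] //=.
  by rewrite big1.
Qed.
End NSdef.

Section Shl.
Variable d : nat.
Local Notation W := (word d).
Variable V : nmodType.
Arguments shw {d} u v : simpl never.

Definition shl (ws : seq W) : seq W :=
  foldr (fun w L => flatten [seq shw w v | v <- L]) [:: [::]] ws.

Lemma shl_cons w ws : shl (w :: ws) = flatten [seq shw w v | v <- shl ws].
Proof. by []. Qed.

Lemma sum_shl_cons w ws (G : W -> V) :
  \sum_(x <- shl (w :: ws)) G x = \sum_(v <- shl ws) \sum_(x <- shw w v) G x.
Proof. by rewrite shl_cons big_flatten big_map. Qed.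

Lemma shl_delta (I : eqType) (r : seq I) (w : I -> W) (F : W -> W -> V) : uniq r ->
  \sum_(x <- shl (map w r)) \sum_(i < (size x).+1) F (take i x) (drop i x) =
  NS r (fun j => size (w j)) (fun c =>
     \sum_(x1 <- shl [seq take (c j) (w j) | j <- r])
       \sum_(x2 <- shl [seq drop (c j) (w j) | j <- r]) F x1 x2).
Proof.
elim: r F => [|j r IH] F /=.
  by move=> _; rewrite !big_seq1 big_ord_recl big_ord0 addr0.
move=> /andP[jr ur].
rewrite sum_shl_cons.
under [X in X = _]eq_bigr => v _ do rewrite shw_delta.
rewrite exchange_big /=; apply: eq_bigr => i _.
rewrite (IH (fun p q => \sum_(x1 <- shw (take i (w j)) p)
                        \sum_(x2 <- shw (drop i (w j)) q) F x1 x2) ur).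
apply: eq_NS => c _.
have Et : [seq take (upd c j i j0) (w j0) | j0 <- r] = [seq take (c j0) (w j0) | j0 <- r].
  apply/eq_in_map => i' ir /=; rewrite /upd.
  have ij : i' != j by apply/eqP => E; move: jr; rewrite -E ir.
  by rewrite (negbTE ij).
have Ed : [seq drop (upd c j i j0) (w j0) | j0 <- r] = [seq drop (c j0) (w j0) | j0 <- r].
  apply/eq_in_map => i' ir /=; rewrite /upd.
  have ij : i' != j by apply/eqP => E; move: jr; rewrite -E ir.
  by rewrite (negbTE ij).
rewrite Et Ed /upd eqxx big_flatten big_map.
apply: eq_bigr => p _.
rewrite exchange_big /=; apply: eq_bigr => x1 _.
by rewrite big_flatten big_map.
Qed.
End Shl.

Lemma card_lt_ord m b : (b <= m)%N -> #|[pred q : 'I_m | (q < b)%N]| = b.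
Proof.
move=> bm.
rewrite cardE /enum_mem -enumT /= size_filter.
rewrite -(count_map val (fun n => (n < b)%N)) val_enum_ord.
rewrite -size_filter.
have -> : b = (0 + b)%N by [].
rewrite filter_iota_ltn ?size_iota //.
Qed.

Lemma prefix_card m (A : pred 'I_m) :
  (forall q q' : 'I_m, (q' <= q)%N -> A q -> A q') -> forall q : 'I_m, A q = (q < #|A|)%N.
Proof.
move=> H q; case Aq: (A q); apply/esym.
- have sub : [pred q' : 'I_m | (q' < q.+1)%N] \subset A.
    apply/fintype.subsetP => q' /=; rewrite inE ltnS => Hq; exact: H Aq.
  have := subset_leq_card sub; rewrite card_lt_ord //.
- have sub : A \subset [pred q' : 'I_m | (q' < q)%N].
    apply/fintype.subsetP => q' Aq'; rewrite inE ltnNge; apply/negP => Hq.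
    by move: (H _ _ Hq Aq'); rewrite Aq.
  have := subset_leq_card sub; rewrite card_lt_ord ?(ltnW (ltn_ord q)) //.
  by move=> h; apply/negbTE; rewrite -leqNgt.
Qed.

Lemma filter_iota_int n a b : (a <= b <= n)%N ->
  [seq i <- iota 0 n | (a <= i < b)%N] = iota a (b - a).
Proof.
move=> /andP[ab bn].
apply: (@irr_sorted_eq _ ltn); first exact: ltn_trans.
- exact: ltnn.
- by apply: sorted_filter; [exact: ltn_trans | exact: iota_ltn_sorted].
- exact: iota_ltn_sorted.
move=> i; rewrite mem_filter !mem_iota add0n subnKC //.
case/boolP: (a <= i < b)%N => //= /andP[_ ib].
by rewrite (leq_trans ib bn).
Qed.

Section Comb.
Variables (d k : nat) (tau : 'I_k -> seq 'I_d).
Local Notation P := (Ptau tau).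
Definition mkP (j : 'I_k) (q : 'I_(size (tau j))) : P :=
  Tagged (fun j => 'I_(size (tau j))) q.

Lemma blockword_int (B : {set P}) j a b : (a <= b <= size (tau j))%N ->
  (forall q : 'I_(size (tau j)), inB B q = (a <= q < b)%N) ->
  blockword B j = take (b - a) (drop a (tau j)).
Proof.
move=> Hab H; rewrite /blockword (eq_filter H).
case: (posnP (size (tau j))) => [s0|spos].
  have E : enum 'I_(size (tau j)) = [::] by apply: size0nil; rewrite size_enum_ord.
  rewrite E; rewrite s0 leqn0 in Hab; case/andP: Hab => _ /eqP ->.
  by rewrite sub0n take0.
pose x0 := tnth (in_tuple (tau j)) (Ordinal spos).
under eq_map => q do rewrite (tnth_nth x0) /=.
rewrite (_ : [seq nth x0 (tau j) (val q) | q <- enum 'I_(size (tau j)) & (a <= nat_of_ord q < b)%N] =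
   map (nth x0 (tau j)) [seq i <- map val (enum 'I_(size (tau j))) | (a <= i < b)%N]);
  last by rewrite filter_map -map_comp.
rewrite val_enum_ord (filter_iota_int Hab) map_nth_iota //.
by case/andP: Hab => _ bs; rewrite leq_sub2r.
Qed.


Definition fib m (g : {ffun P -> 'I_m}) (v : nat) : {set P} := [set x | (g x : nat) == v].

Definition valid n (s : 'I_k -> nat) (g : {ffun P -> 'I_n.+1}) : bool :=
  [&& order_pres (@le_tau d k tau) (fun x => nat_of_ord (g x)),
      [forall x, ((g x : nat) == 0%N) == (tagged x < s (tag x))%N] &
      [forall i : 'I_n, [exists x, (g x : nat) == i.+1]]].

Definition cnt m (s : 'I_k -> nat) (g : {ffun P -> 'I_m}) (j : 'I_k) : nat :=
  (#|[pred q : 'I_(size (tau j)) | (g (mkP q) <= 1)%N]| - s j)%N.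

Lemma le_tau_mkP j (q q' : 'I_(size (tau j))) : le_tau (mkP q) (mkP q') = (q <= q')%N.
Proof. by rewrite /le_tau /= eqxx. Qed.

Lemma op_chain (f : P -> nat) : order_pres (@le_tau d k tau) f ->
  forall j (q q' : 'I_(size (tau j))), (q <= q')%N -> (f (mkP q) <= f (mkP q'))%N.
Proof.
move=> /forallP H j q q' Hq.
by move: (H (mkP q)) => /forallP /(_ (mkP q')) /implyP; apply; rewrite le_tau_mkP.
Qed.

Lemma op_intro (f : P -> nat) :
  (forall j (q q' : 'I_(size (tau j))), (q <= q')%N -> (f (mkP q) <= f (mkP q'))%N) ->
  order_pres (@le_tau d k tau) f.
Proof.
move=> H; apply/forallP => -[j q]; apply/forallP => -[j' q']; apply/implyP.
rewrite /le_tau /= => /andP[/eqP Ej]; move: q'; rewrite -Ej => q' Hq.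
exact: (H j q q' Hq).
Qed.

Lemma valid_zero n s (g : {ffun P -> 'I_n.+1}) : valid s g ->
  forall j (q : 'I_(size (tau j))), ((g (mkP q) : nat) == 0%N) = (q < s j)%N.
Proof. by case/and3P => _ /forallP H _ j q; move: (H (mkP q)) => /eqP. Qed.

Lemma valid_op n s (g : {ffun P -> 'I_n.+1}) : valid s g ->
  forall j (q q' : 'I_(size (tau j))), (q <= q')%N -> (g (mkP q) <= g (mkP q'))%N.
Proof. by case/and3P => H _ _; exact: (op_chain H). Qed.

Lemma valid_prefix n s (g : {ffun P -> 'I_n.+1}) : valid s g ->
  forall j, (s j <= size (tau j))%N ->
  forall q : 'I_(size (tau j)), ((g (mkP q) : nat) <= 1)%N = (q < s j + cnt s g j)%N.
Proof.
move=> Hv j sj q.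
set A := [pred q : 'I_(size (tau j)) | (g (mkP q) <= 1)%N].
have HA : forall q q' : 'I_(size (tau j)), (q' <= q)%N -> A q -> A q'.
  by move=> q1 q2 H12; rewrite !inE /=; apply: leq_trans; apply: (valid_op Hv).
have -> : ((g (mkP q) : nat) <= 1)%N = A q by [].
rewrite (prefix_card HA) /cnt subnKC //.
rewrite -{1}(card_lt_ord sj); apply: subset_leq_card; apply/fintype.subsetP => q' /=.
rewrite !inE => Hq'; move: (valid_zero Hv q'); rewrite Hq' => /eqP ->.
by [].
Qed.


Lemma mkP_tag (x : P) : mkP (tagged x) = x.
Proof. by case: x. Qed.

Lemma valid_zeroP n s (g : {ffun P -> 'I_n.+1}) : valid s g ->
  forall x, ((g x : nat) == 0%N) = (tagged x < s (tag x))%N.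
Proof. by move=> Hv x; rewrite -(mkP_tag x) (valid_zero Hv). Qed.

Lemma valid_prefixP n s (g : {ffun P -> 'I_n.+1}) : valid s g ->
  (forall j, (s j <= size (tau j))%N) ->
  forall x, ((g x : nat) <= 1)%N = (tagged x < s (tag x) + cnt s g (tag x))%N.
Proof. by move=> Hv Hs x; rewrite -{1}(mkP_tag x) (valid_prefix Hv). Qed.

Definition phi n (s : 'I_k -> nat) (g : {ffun P -> 'I_n.+1}) : {ffun P -> 'I_n.+2} :=
  [ffun x => inord (if (g x : nat) == 0%N then (if (tagged x < s (tag x))%N then 0%N else 1%N)
                    else (g x).+1)].
Definition psi n (g : {ffun P -> 'I_n.+2}) : {ffun P -> 'I_n.+1} :=
  [ffun x => inord (g x).-1].

Lemma phiE n s (g : {ffun P -> 'I_n.+1}) x : (phi s g x : nat) =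
  if (g x : nat) == 0%N then (if (tagged x < s (tag x))%N then 0%N else 1%N) else (g x).+1.
Proof.
rewrite ffunE inordK //; case: ifP => _; first by case: ifP.
by rewrite ltnS ltn_ord.
Qed.

Lemma psiE n (g : {ffun P -> 'I_n.+2}) x : (psi g x : nat) = (g x).-1.
Proof. by rewrite ffunE inordK //; case: (g x) => [[|m] Hm]. Qed.

Lemma pred0E m : (m.-1 == 0%N) = (m <= 1)%N.
Proof. by case: m => [|[|m]]. Qed.

Section Step.
Variables (n : nat) (s c : 'I_k -> nat).
Hypothesis hsc : forall j, (s j + c j <= size (tau j))%N.
Local Notation sc := (fun j => (s j + c j)%N).
Let hs : forall j, (s j <= size (tau j))%N.
Proof. by move=> j; apply: leq_trans (hsc j); apply: leq_addr. Qed.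

Definition Hyp (g : {ffun P -> 'I_n.+2}) := valid s g && all (fun j => c j == cnt s g j) (enum 'I_k).

Lemma Hyp_cnt g : Hyp g -> forall j, cnt s g j = c j.
Proof. by case/andP => _ /allP H j; apply/esym/eqP; apply: H; rewrite mem_enum. Qed.

Lemma Hyp_prefix g : Hyp g -> forall x,
  ((g x : nat) <= 1)%N = (tagged x < sc (tag x))%N.
Proof.
move=> Hg x; rewrite (valid_prefixP (andP Hg).1 hs) Hyp_cnt //.
Qed.

Lemma phipsi g : Hyp g -> phi s (psi g) = g.
Proof.
move=> Hg; apply/ffunP => x; apply/val_inj => /=; rewrite phiE psiE pred0E.
have Hz := valid_zeroP (andP Hg).1 x.
case: (g x) Hz => [[|[|v]] Hv] //= Hz.
- by rewrite -Hz.
- by rewrite -Hz.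
Qed.

Lemma psi_valid g : Hyp g -> valid sc (psi g).
Proof.
move=> Hg; have Hv := (andP Hg).1.
apply/and3P; split.
- apply: op_intro => j q q' Hq; rewrite !psiE -!subn1 leq_sub2r //.
  exact: (valid_op Hv).
- apply/forallP => x; rewrite psiE pred0E Hyp_prefix //.
- apply/forallP => i; case/and3P: Hv => _ _ /forallP /(_ (lift ord0 i)) /existsP [x Hx].
  by apply/existsP; exists x; rewrite psiE (eqP Hx).
Qed.

Hypothesis cpos : exists j0, (0 < c j0)%N.

Lemma phi_Hyp g' : valid sc g' -> Hyp (phi s g') && (psi (phi s g') == g').
Proof.
move=> Hv'; have Z' := valid_zeroP Hv'.
have pv : forall x, ((phi s g' x : nat) <= 1)%N = ((g' x : nat) == 0%N).
  move=> x; rewrite phiE; case: (nat_of_ord (g' x)) => [|m] /=; first by case: ifP.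
  by [].
apply/andP; split; last first.
  apply/eqP/ffunP => x; apply/val_inj => /=; rewrite psiE phiE.
  by case: eqP => [->|]; [case: ifP|].
apply/andP; split; last first.
  apply/allP => j _; rewrite /cnt.
  rewrite (eq_card (B := [pred q : 'I_(size (tau j)) | (q < sc j)%N])); last first.
    by move=> q; rewrite !inE /= pv Z' /=.
  by rewrite card_lt_ord // addKn.
apply/and3P; split.
- apply: op_intro => j q q' Hq; rewrite !phiE.
  have Hop := valid_op Hv' Hq.
  case: eqP => E; case: eqP => E'.
  + case: ifP => // Hq1; case: ifP => // Hq2.
    by rewrite (leq_ltn_trans Hq Hq2) in Hq1.
  + by case: ifP.
  + by move: Hop; rewrite E' leqn0 => /eqP.
  + by rewrite ltnS.
- apply/forallP => x; apply/eqP; rewrite phiE.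
  case: ifP => E.
    by case: ifP.
  apply/esym/negbTE/negP => Hx.
  by move: E; rewrite Z' /= ltn_addr.
- apply/forallP => i; case: (unliftP ord0 i) => [i'|] ->.
    case/and3P: Hv' => _ _ /forallP /(_ i') /existsP [x Hx].
    by apply/existsP; exists x; rewrite phiE (eqP Hx).
  case: cpos => j0 cj0.
  have Hq : (s j0 < size (tau j0))%N.
    by apply: leq_trans (hsc j0); rewrite -addn1 leq_add2l.
  apply/existsP; exists (mkP (Ordinal Hq)); rewrite phiE /=.
  have -> : (g' (mkP (Ordinal Hq)) : nat) == 0%N.
    by rewrite Z' /= -{1}(addn0 (s j0)) ltn_add2l.
  by rewrite ltnn.
Qed.

Lemma fib_phi (g' : {ffun P -> 'I_n.+1}) (i : nat) : fib (phi s g') i.+2 = fib g' i.+1.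
Proof.
apply/setP => x; rewrite !inE phiE; case: ifP => E.
  by rewrite (eqP E); case: ifP.
by [].
Qed.

Variable V : comRingType.
Variable Phi : {set P} -> V.

Lemma reindex_step :
  \sum_(g | Hyp g) \prod_(i < n) Phi (fib g i.+2) =
  \sum_(g' : {ffun P -> 'I_n.+1} | valid sc g') \prod_(i < n) Phi (fib g' i.+1).
Proof.
rewrite (reindex_onto (phi s) (@psi n) (fun g Hg => phipsi Hg)).
apply: eq_big => g'.
  apply/idP/idP; last exact: phi_Hyp.
  by case/andP => H /eqP E; rewrite -E; apply: psi_valid.
by move=> _; apply: eq_bigr => i _; rewrite fib_phi.
Qed.
End Step.

End Comb.

Section SizeShuffle.
Variable d : nat.
Local Notation W := (word d).
Arguments shw {d} u v : simpl never.

Lemma size_shw (u v x : W) : x \in shw u v -> size x = (size u + size v)%N.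
Proof.
move: {2}(size u + size v)%N (leqnn (size u + size v)%N) => m.
elim: m u v x => [|m IH] u v x.
  by case: u => [|a u] //; case: v => [|b v] // _; rewrite inE => /eqP ->.
case: u => [|a u]; first by move=> _; rewrite shw_nil_l inE => /eqP ->.
case: v => [|b v]; first by move=> _; rewrite shw_nil_r inE => /eqP ->; rewrite addn0.
move=> Hs; rewrite shw_cons mem_cat => /orP[] /mapP [y Hy ->] /=.
  by rewrite (IH _ _ _ _ Hy) //; move: Hs => /=; rewrite addSn ltnS.
by rewrite (IH _ _ _ _ Hy) ?addnS //; move: Hs => /=; rewrite addnS ltnS.
Qed.

Lemma size_shl (ws : seq W) x : x \in shl ws -> size x = sumn (map size ws).
Proof.
elim: ws x => [|w ws IH] x /=; first by rewrite inE => /eqP ->.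
case/flatten_mapP => v Hv Hx.
by rewrite (size_shw Hx) (IH _ Hv).
Qed.

Lemma shl_nil (ws : seq W) : all (fun w => w == [::]) ws -> shl ws = [:: [::]].
Proof.
elim: ws => [|w ws IH] //= /andP[/eqP -> H].
by rewrite (IH H).
Qed.

Lemma sumn_pos (ws : seq W) : has (fun w => w != [::]) ws -> (0 < sumn (map size ws))%N.
Proof.
elim: ws => [|w ws IH] //= /orP[H|H].
  by rewrite addn_gt0 lt0n size_eq0 H.
by rewrite addn_gt0 IH ?orbT.
Qed.
End SizeShuffle.

Section Mom.
Variables (R : realType) (d k : nat) (tau : 'I_k -> seq 'I_d) (mu : tseries R d).
Hypothesis mu0 : mu [::] = 1.
Local Notation P := (Ptau tau).
Local Notation rk := (enum 'I_k).

Definition Mw (ws : seq (word d)) : R := \sum_(x <- shl ws) mu x.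
Definition zz : tseries R d := fun v => mu v - tone R v.
Definition Zw (ws : seq (word d)) : R := \sum_(x <- shl ws) zz x.
Definition Phi (B : {set P}) : R := Mw [seq blockword B j | j <- rk].
Definition Wt n (g : {ffun P -> 'I_n.+1}) : R := \prod_(i < n) Phi (fib g i.+1).

Lemma sum_tone (ws : seq (word d)) :
  \sum_(x <- shl ws) tone R x = if all (fun w => w == [::]) ws then 1 else 0.
Proof.
case: ifP => H; first by rewrite shl_nil // big_seq1.
rewrite big_seq big1 // => x Hx.
have : (0 < size x)%N.
  rewrite (size_shl Hx) sumn_pos //.
  by move/negbT: H; rewrite -has_predC.
by case: x Hx.
Qed.

Lemma Zw_nil ws : all (fun w => w == [::]) ws -> Zw ws = 0.
Proof. by move=> H; rewrite /Zw shl_nil // big_seq1 /zz /= mu0 subrr. Qed.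

Lemma Zw_M ws : has (fun w => w != [::]) ws -> Zw ws = Mw ws.
Proof.
move=> H; rewrite /Zw /Mw /zz big_split /= sumrN sum_tone.
suff -> : all (fun w => w == [::]) ws = false by rewrite subr0.
by apply/negbTE; rewrite -has_predC.
Qed.

Lemma step_lemma n (s c : 'I_k -> nat) :
  (forall j, (s j + c j <= size (tau j))%N) ->
  \sum_(g : {ffun P -> 'I_n.+2} | valid s g)
     (if all (fun j => c j == cnt s g j) rk then Wt g else 0)
  = Zw [seq take (c j) (drop (s j) (tau j)) | j <- rk] *
    \sum_(g : {ffun P -> 'I_n.+1} | valid (fun j => s j + c j)%N g) Wt g.
Proof.
move=> hsc.
have hs : forall j, (s j <= size (tau j))%N.
  by move=> j; apply: leq_trans (hsc j); apply: leq_addr.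
case: (boolP [exists j, (0 < c j)%N]) => [/existsP cpos|].
- rewrite Zw_M; last first.
    case: cpos => j0 cj0; apply/hasP; exists (take (c j0) (drop (s j0) (tau j0))).
      by apply/mapP; exists j0; rewrite ?mem_enum.
    rewrite -size_eq0 size_take size_drop.
    have : (0 < size (tau j0) - s j0)%N.
      by rewrite subn_gt0; apply: leq_trans (hsc j0); rewrite -addn1 leq_add2l.
    by case: ifP => _; rewrite -lt0n.
  rewrite -big_mkcondr /=.
  have -> : \sum_(g : {ffun P -> 'I_n.+2} | valid s g && all (fun j => c j == cnt s g j) rk) Wt g =
     \sum_(g : {ffun P -> 'I_n.+2} | Hyp s c g) (Mw [seq take (c j) (drop (s j) (tau j)) | j <- rk] *
                          \prod_(i < n) Phi (fib g i.+2)).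
    apply: eq_bigr => g Hg; rewrite /Wt big_ord_recl /=; congr (_ * _).
    rewrite /Phi; congr Mw; apply/eq_in_map => j _.
    rewrite (@blockword_int _ _ tau _ j (s j) (s j + c j)); first by rewrite addKn.
      by rewrite leq_addr hsc.
    move=> q; rewrite /inB inE.
    have Hp := Hyp_prefix hsc Hg (mkP q); have Hz := valid_zero (andP Hg).1 q.
    rewrite /= in Hp.
    case: (nat_of_ord (g (mkP q))) Hp Hz => [|[|v]] /=.
    + by move=> _ Hz; rewrite leqNgt -Hz.
    + by move=> Hp Hz; rewrite leqNgt -Hz -Hp.
    + by move=> Hp _; rewrite -Hp andbF.
  rewrite -big_distrr /=; congr (_ * _).
  exact: (reindex_step n hsc cpos Phi).
- rewrite negb_exists => /forallP cz.
  have c0 : forall j, c j = 0%N by move=> j; move: (cz j); rewrite lt0n negbK => /eqP.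
  rewrite Zw_nil ?mul0r; last first.
    by apply/allP => w /mapP [j _ ->]; rewrite c0 take0.
  rewrite big1 // => g Hv; case: ifP => // /allP Hall.
  exfalso.
  case/and3P: (Hv) => _ _ /forallP /(_ ord0) /existsP [x /eqP Hx].
  have Hp := valid_prefixP Hv hs x.
  have Hz := valid_zeroP Hv x.
  have Hc : cnt s g (tag x) = 0%N.
    by move: (Hall (tag x)); rewrite mem_enum c0 => /(_ isT) /eqP <-.
  by move: Hp Hz; rewrite Hx Hc addn0 /= => <-.
Qed.


Lemma main_claim n : forall s : 'I_k -> nat, (forall j, (s j <= size (tau j))%N) ->
  \sum_(x <- shl [seq drop (s j) (tau j) | j <- rk]) tpow zz n x =
  \sum_(g : {ffun P -> 'I_n.+1} | valid s g) Wt g.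
Proof.
elim: n => [|n IH] s hs.
- rewrite (_ : \sum_(x <- _) tpow zz 0 x = \sum_(x <- shl [seq drop (s j) (tau j) | j <- rk]) tone R x) //.
  rewrite sum_tone.
  have Hv : forall g : {ffun P -> 'I_1}, valid s g = [forall x : P, (tagged x < s (tag x))%N].
    move=> g; have g0 : forall x, (g x : nat) = 0%N by move=> x; case: (g x) => -[].
    rewrite /valid.
    have -> : order_pres (@le_tau d k tau) (fun x => nat_of_ord (g x)).
      by apply: op_intro => j q q' _; rewrite !g0.
    have -> : [forall i : 'I_0, [exists x, (g x : nat) == i.+1]] by apply/forallP => -[].
    rewrite andbT /=; apply: eq_forallb => x; by rewrite g0 eqxx.
  under eq_bigl => g do rewrite Hv.
  have -> : all (fun w => w == [::]) [seq drop (s j) (tau j) | j <- rk] =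
            [forall x : P, (tagged x < s (tag x))%N].
    rewrite all_map; apply/allP/forallP => /= H.
      move=> x; apply: leq_trans (ltn_ord (tagged x)) _.
      by move: (H (tag x) (mem_enum _ _)) => /=; rewrite -size_eq0 size_drop subn_eq0.
    move=> j _ /=; rewrite -size_eq0 size_drop subn_eq0 leqNgt; apply/negP => Hlt.
    by move: (H (mkP (Ordinal Hlt))); rewrite /= ltnn.
  case: ifP => _; last by rewrite big_pred0.
  rewrite (eq_bigr (fun _ => 1)); last by move=> g _; rewrite /Wt big_ord0.
  by rewrite sumr_const card_ffun !card_ord exp1n.
- rewrite (_ : \sum_(x <- _) tpow zz n.+1 x =
     \sum_(x <- shl [seq drop (s j) (tau j) | j <- rk])
        \sum_(i < (size x).+1) zz (take i x) * tpow zz n (drop i x)) //.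
  rewrite (shl_delta (fun j => drop (s j) (tau j)) (fun p q => zz p * tpow zz n q) (enum_uniq _)).
  transitivity (NS rk (fun j => size (drop (s j) (tau j))) (fun c =>
     \sum_(g : {ffun P -> 'I_n.+2} | valid s g)
       (if all (fun j => c j == cnt s g j) rk then Wt g else 0))).
    apply: eq_NS => c Hc.
    have hsc : forall j, (s j + c j <= size (tau j))%N.
      by move=> j; rewrite -leq_subRL // -size_drop.
    rewrite step_lemma // -(IH _ hsc) big_distrl /=; apply: eq_bigr => x1 _.
    rewrite big_distrr /=.
    have -> : [seq drop (c j) (drop (s j) (tau j)) | j <- rk] =
              [seq drop (s j + c j) (tau j) | j <- rk].
      by apply/eq_in_map => j _; rewrite drop_drop addnC.
    by [].
  rewrite NS_sum; apply: eq_bigr => g Hv; rewrite NS_delta ?enum_uniq // => j _.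
  rewrite size_drop /cnt leq_sub2r //.
  by apply: leq_trans (max_card _) _; rewrite card_ord.
Qed.

End Mom.

Section Integ.
Local Open Scope classical_set_scope.
Variables (dO : measure_display) (Omega : measurableType dO) (R : realType)
  (Pr : probability Omega R).

Lemma Rint_sum (I : Type) (s : seq I) (f : I -> Omega -> R) :
  (forall i, Pr.-integrable setT (EFin \o f i)) ->
  Pr.-integrable setT (EFin \o (fun om => \sum_(i <- s) f i om)) /\
  Rintegral Pr setT (fun om => \sum_(i <- s) f i om) = \sum_(i <- s) Rintegral Pr setT (f i).
Proof.
move=> Hf; elim: s => [|i s [IHi IHe]].
  split.
    apply: eq_integrable (integrable0 _ _) => //= om _; by rewrite big_nil.
  rewrite big_nil (_ : (fun om => _) = (fun _ : Omega => 0)); last first.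
    by apply: funext => om; rewrite big_nil.
  by rewrite Rintegral_cst // mul0r.
split.
  apply: eq_integrable (integrableD _ (Hf i) IHi) => //= om _.
  by rewrite big_cons EFinD.
rewrite big_cons -IHe -RintegralD //.
by apply: eq_Rintegral => om _; rewrite big_cons.
Qed.

Lemma Rint_one (f : Omega -> R) : (forall om, f om = 1) -> Rintegral Pr setT f = 1.
Proof.
move=> H; rewrite (_ : f = (fun _ : Omega => 1)); last by apply: funext.
rewrite Rintegral_cst // mul1r -[RHS]/(fine (1%:E)); congr fine.
exact: probability_setT.
Qed.
End Integ.

Section Tens.
Variables (R : realType) (d : nat).

Lemma foldr_shp_eq (ws : seq (word d)) :
  foldr (@shp R d) (ebasis R [::]) (map (@ebasis R d) ws) = map (fun w => (1, w)) (shl ws).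
Proof.
elim: ws => [|w ws IH] //=.
rewrite IH /shp /ebasis /= cats0 map_flatten -!map_comp.
congr flatten; apply: eq_map => v /=; apply: eq_map => x /=.
by rewrite mul1r.
Qed.

Lemma pairing_map1 (x : tseries R d) L :
  pairing x (map (fun w => (1, w)) L) = \sum_(w <- L) x w.
Proof. by rewrite /pairing big_map; apply: eq_bigr => w _ /=; rewrite mul1r. Qed.

Lemma pairing_ebasis (x : tseries R d) w : pairing x (ebasis R w) = x w.
Proof. by rewrite /pairing /ebasis big_seq1 mul1r. Qed.

Lemma shl_prod (x : tseries R d) (ws : seq (word d)) : x [::] = 1 ->
  (forall f g, pairing x (shp f g) = pairing x f * pairing x g) ->
  \sum_(w <- shl ws) x w = \prod_(w <- ws) x w.
Proof.
move=> x0 Hm; rewrite -pairing_map1 -foldr_shp_eq.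
elim: ws => [|w ws IH] /=; first by rewrite pairing_ebasis big_nil.
by rewrite Hm IH pairing_ebasis big_cons.
Qed.
End Tens.

Section Kerf.
Variables (d k : nat) (tau : 'I_k -> seq 'I_d).
Local Notation P := (Ptau tau).

Lemma kerf_card n (g : {ffun P -> 'I_n.+1}) :
  #|kerf (fun x => nat_of_ord (g x))| = #|[set g x | x : P]|.
Proof.
have -> : kerf (fun x => nat_of_ord (g x)) =
  (fun v : 'I_n.+1 => [set y | g y == v]) @: [set g x | x : P].
  rewrite /kerf -imset_comp; apply: eq_imset => x /=.
  by apply/finset.setP => y; rewrite !inE.
apply: card_in_imset => v v' /imsetP [x _ ->] _ E.
by move/finset.setP: E => /(_ x); rewrite !inE eqxx => /esym /eqP.
Qed.

Lemma cond_valid n (g : {ffun P -> 'I_n.+1}) :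
  ([forall x, (0 < g x)%N] && order_pres (@le_tau d k tau) (fun x => nat_of_ord (g x)) &&
   (#|kerf (fun x => nat_of_ord (g x))| == n)) = valid (fun _ => 0%N) g.
Proof.
rewrite /valid.
have -> : [forall x, ((g x : nat) == 0%N) == (tagged x < 0)%N] = [forall x, (0 < g x)%N].
  by apply: eq_forallb => x; rewrite ltn0 lt0n eqbF_neg.
case Hpos: [forall x, (0 < g x)%N] => /=; last by rewrite andbF.
congr (_ && _).
set L := [set g x | x : P].
set C := [set~ (ord0 : 'I_n.+1)].
have LC : L \subset C.
  apply/fintype.subsetP => v /imsetP [x _ ->]; rewrite !inE.
  by move/forallP: Hpos => /(_ x); rewrite lt0n; apply: contra => /eqP ->.
have cC : #|C| = n by rewrite cardsC1 card_ord.
rewrite kerf_card -/L; have -> : (#|L| == n) = (#|L| == #|C|) by rewrite cC.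
have -> : (#|L| == #|C|) = (C \subset L).
  apply/idP/idP => H.
    have : L == C by rewrite eqEcard LC (eqP H) leqnn.
    by move/eqP => ->.
  by rewrite eqn_leq (subset_leq_card LC) (subset_leq_card H).
apply/idP/idP.
  move/fintype.subsetP => H; apply/forallP => i.
  have : lift ord0 i \in C by rewrite !inE eq_sym neq_lift.
  move/H/imsetP => [x _ Ex]; apply/existsP; exists x.
  by rewrite -Ex lift0.
move/forallP => H; apply/fintype.subsetP => v; rewrite !inE.
case: (unliftP ord0 v) => [i ->|->]; last by rewrite eqxx.
move=> _; move: (H i) => /existsP [x /eqP Hx].
apply/imsetP; exists x => //; apply/val_inj => /=; by rewrite Hx /bump leq0n add1n.
Qed.

Lemma kerf_fib n (g : {ffun P -> 'I_n.+1}) : valid (fun _ => 0%N) g ->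
  kerf (fun x => nat_of_ord (g x)) = [set fib g i.+1 | i : 'I_n].
Proof.
move=> Hv; apply/finset.setP => B; apply/imsetP/imsetP => -[z _ ->].
  have : (g z : nat) != 0%N by rewrite (valid_zeroP Hv) ltn0.
  have := ltn_ord (g z); case: (nat_of_ord (g z)) (erefl (nat_of_ord (g z))) => [|m] // Ez Hm _.
  exists (Ordinal (Hm : (m < n)%N)) => //.
case/and3P: Hv => _ _ /forallP /(_ z) /existsP [x /eqP Hx].
exists x => //; apply/finset.setP => y; rewrite !inE Hx //.
Qed.

Lemma fib_inj n (g : {ffun P -> 'I_n.+1}) : valid (fun _ => 0%N) g ->
  injective (fun i : 'I_n => fib g i.+1).
Proof.
move=> Hv i j E; case/and3P: Hv => _ _ /forallP /(_ i) /existsP [x /eqP Hx].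
move/finset.setP: E => /(_ x); rewrite !inE Hx eqxx => /esym /eqP [] Eij.
exact: val_inj.
Qed.
End Kerf.

Section Final.
Variables (R : realType) (dO : measure_display)
  (Omega : measurableType dO) (Pr : probability Omega R)
  (d : nat) (T : R) (X : Omega -> R -> R -> tseries R d).
Hypothesis X0 : forall om, X om 0 T [::] = 1.
Hypothesis Xm : forall om f g,
  pairing (X om 0 T) (shp f g) = pairing (X om 0 T) f * pairing (X om 0 T) g.
Hypothesis Hint : forall sigma : word d, Pr.-integrable setT (fun om => (X om 0 T sigma)%:E).
Variables (k : nat) (tau : 'I_k -> seq 'I_d).
Local Notation P := (Ptau tau).
Local Notation mu := (muX Pr T X).

Lemma mu0 : mu [::] = 1.
Proof. by rewrite /muX; apply: Rint_one. Qed.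

Lemma MwE ws : Mw mu ws = Rintegral Pr setT (fun om => \prod_(w <- ws) X om 0 T w).
Proof.
rewrite /Mw /muX.
have [_ <-] := @Rint_sum _ _ _ Pr _ (shl ws) (fun x om => X om 0 T x) Hint.
by congr Rintegral; apply: funext => om; apply: shl_prod.
Qed.

Lemma blockword_nil (B : {set P}) j : ~~ [exists q : 'I_(size (tau j)), inB B q] -> blockword B j = [::].
Proof.
rewrite negb_exists => /forallP H; rewrite /blockword.
rewrite (eq_filter (a2 := pred0)) ?filter_pred0 // => q; exact/negbTE/H.
Qed.

Lemma gm_Wt n (g : {ffun P -> 'I_n.+1}) : valid (fun _ => 0%N) g ->
  gen_moment Pr T X (kerf (fun x => nat_of_ord (g x))) = Wt mu g.
Proof.
move=> Hv; rewrite /gen_moment (kerf_fib Hv) big_imset /=; last first.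
  by move=> i j _ _; apply: fib_inj.
rewrite /Wt; apply: eq_bigr => i _.
rewrite /Phi MwE; congr Rintegral; apply: funext => om.
rewrite big_map big_enum /= big_mkcond /=; apply: eq_bigr => j _.
by case: ifP => // /negbT /blockword_nil ->; rewrite X0.
Qed.

Lemma afact_sum (a : {set {set P}}) n (G : R) : #|a| = n ->
  (afact (@le_tau d k tau) a)%:R * G =
  \sum_(g : {ffun P -> 'I_n.+1} | [forall x, (0 < g x)%N] &&
        order_pres (@le_tau d k tau) (fun x => nat_of_ord (g x)) &&
        (kerf (fun x => nat_of_ord (g x)) == a)) G.
Proof.
move=> Ha; subst n; rewrite /afact.
rewrite (eq_bigl (fun g => g \in [set g : {ffun P -> 'I_(#|a|).+1} | [forall x, (0 < g x)%N] &&
        order_pres (@le_tau d k tau) (fun x => nat_of_ord (g x)) &&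
        (kerf (fun x => nat_of_ord (g x)) == a)])); last by move=> g; rewrite inE.
by rewrite sumr_const mulr_natl.
Qed.

Lemma per_n n :
  \sum_(a : {set {set P}} | `[< isOrp (@le_tau d k tau) a >] && (#|a| == n))
     ((-1) ^+ (#|a|.-1) * ((afact (@le_tau d k tau) a)%:R / (#|a|)%:R)
      * gen_moment Pr T X a)
  = ((-1) ^+ n.-1 / n%:R) *
    \sum_(g : {ffun P -> 'I_n.+1} | valid (fun _ => 0%N) g) Wt mu g.
Proof.
set Q := fun g : {ffun P -> 'I_n.+1} => [forall x, (0 < g x)%N] &&
        order_pres (@le_tau d k tau) (fun x => nat_of_ord (g x)).
rewrite (eq_bigr (fun a => ((-1) ^+ n.-1 / n%:R) *
   \sum_(g : {ffun P -> 'I_n.+1} | Q g && (kerf (fun x => nat_of_ord (g x)) == a))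
       gen_moment Pr T X a)); last first.
  move=> a /andP[_ /eqP Ha]; rewrite -(afact_sum _ Ha) Ha; ring.
rewrite -big_distrr /=; congr (_ * _).
rewrite (exchange_big_dep Q) /=; last by move=> a g _ /andP[].
rewrite [RHS](eq_bigl (fun g => Q g && (#|kerf (fun x => nat_of_ord (g x))| == n))); last first.
  by move=> g; rewrite -cond_valid.
rewrite [RHS]big_mkcondr /=; apply: eq_bigr => g Qg.
have Orp : `[< isOrp (@le_tau d k tau) (kerf (fun x => nat_of_ord (g x))) >].
  apply/asboolP; exists (fun x => nat_of_ord (g x)); split => //.
  by case/andP: Qg.
case Hc: (#|kerf (fun x => nat_of_ord (g x))| == n).
  rewrite (eq_bigl (fun a => a == kerf (fun x => nat_of_ord (g x)))); last first.
    move=> a; rewrite Qg /=; case: (eqVneq a (kerf (fun x => nat_of_ord (g x)))) => [->|ne].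
      by rewrite Orp Hc.
    have ne' : (kerf (fun x => nat_of_ord (g x)) == a) = false by rewrite eq_sym; apply/negbTE.
    by rewrite andbF.
  rewrite big_pred1_eq; apply: gm_Wt; rewrite -cond_valid Hc andbT; exact: Qg.
rewrite big_pred0 // => a; rewrite Qg /=.
case: (eqVneq (kerf (fun x => nat_of_ord (g x))) a) => [E|_]; last by rewrite andbF.
by rewrite -E Hc andbF.
Qed.
End Final.

Unset Implicit Arguments. Set Strict Implicit.

Theorem proposition3p3 (R : realType) (dO : measure_display)
  (Omega : measurableType dO) (Pr : probability Omega R)
  (d : nat) (p T : R) (X : Omega -> R -> R -> tseries R d) :
  1 <= p -> 0 < T ->
  (forall om, wgrp p T (X om)) ->
  (forall sigma : word d, Pr.-integrable setT (fun om => (X om 0 T sigma)%:E)) ->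
  forall (k : nat) (tau : 'I_k -> seq 'I_d),
    (1 <= k)%N -> (forall j, tau j != [::]) ->
    pairing (kappaX Pr T X)
      (foldr (@shp R d) (ebasis R [::]) [seq ebasis R (tau j) | j <- enum 'I_k])
    = \sum_(a : {set {set Ptau tau}} | `[< isOrp (@le_tau d k tau) a >])
        ((-1) ^+ (#|a|.-1) * ((afact (@le_tau d k tau) a)%:R / (#|a|)%:R)
         * gen_moment Pr T X a).
Proof.
move=> p1 T0 Hw Hint k tau k1 tne.
have X0 : forall om, X om 0 T [::] = 1.
  move=> om; case: (Hw om) => H _ _.
  by case: (H 0 T (lexx 0) (ltW T0) (lexx T)).
have Xm : forall om f g, pairing (X om 0 T) (shp f g) =
                         pairing (X om 0 T) f * pairing (X om 0 T) g.
  move=> om f g; case: (Hw om) => H _ _.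
  by case: (H 0 T (lexx 0) (ltW T0) (lexx T)) => _ Hm; apply: Hm.
have mu0' := mu0 Pr X0.
rewrite (_ : [seq ebasis R (tau j) | j <- enum 'I_k] =
             map (@ebasis R d) [seq tau j | j <- enum 'I_k]); last by elim: (enum 'I_k) => //= j s ->.
rewrite foldr_shp_eq pairing_map1.
set ws0 := [seq tau j | j <- enum 'I_k].
set N := sumn (map size ws0).
rewrite big_seq.
under eq_bigr => x Hx do rewrite /kappaX /tlog (size_shl Hx).
rewrite -big_seq exchange_big /=.
under eq_bigr => n _ do rewrite -big_distrr /=.
have E0 : ws0 = [seq drop 0 (tau j) | j <- enum 'I_k] by apply: eq_map => j; rewrite drop0.
under eq_bigr => n _ do rewrite E0 (main_claim mu0' n (fun j => leq0n _)).
have cardP : #|{: {j : 'I_k & 'I_(size (tau j))}}| = N.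
  rewrite card_tagged /N /ws0 -map_comp; congr sumn; apply: eq_map => j /=.
  by rewrite card_ord.
have Ha : forall a : {set {set Ptau tau}}, `[< isOrp (@le_tau d k tau) a >] -> (#|a| < N.+1)%N.
  move=> a /asboolP [f [_ <-]]; rewrite ltnS /kerf -cardP.
  exact: leq_trans (leq_imset_card _ _) (max_card _).
rewrite [RHS](partition_big (fun a : {set {set Ptau tau}} => inord #|a| : 'I_N.+1) predT) //.
rewrite (eq_bigr (fun n : 'I_N.+1 => ((-1) ^+ n.-1 / n%:R) *
    \sum_(g : {ffun Ptau tau -> 'I_n.+1} | valid (fun _ => 0%N) g) Wt (muX Pr T X) g)); last first.
  move=> n _; rewrite -(per_n X0 Xm Hint); apply: eq_bigl => a.
  case Oa: `[< isOrp (@le_tau d k tau) a >] => //=.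
  by rewrite -val_eqE /= inordK ?Ha.
rewrite -(big_mkord xpredT (fun n => ((-1) ^+ n.-1 / n%:R) *
    \sum_(g : {ffun Ptau tau -> 'I_n.+1} | valid (fun _ => 0%N) g) Wt (muX Pr T X) g)).
rewrite [RHS]big_ltn // invr0 mulr0 mul0r; apply/esym; exact: add0r.
Qed.
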